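(* Let $\alpha\neq\beta$, let $(g_n)$ be as in the context, set $w=\dfrac{\beta-x}{\beta-\alpha}$ and $\Phi(y)=\dfrac{(\alpha-\beta)yw+\beta}{1-yw}$. Let $y=y(t)$ be the unique formal power series in $t$ with $y(0)=0$ satisfying $y=t\,\Phi(y)$. Then for all $n\ge0$, $$g_n(x)=[t^n]\,\frac{1}{1-y(t)},\qquad\text{i.e.}\qquad \sum_{n\ge0}g_n(x)\,t^n=\frac{1}{1-y(t)}.$$
   Context: Fix complex numbers $\alpha\neq\beta$. Define polynomials $g_n(x)\in\mathbb{C}[x]$ recursively by $g_0(x)=1$ and, for $n\ge1$, $$(x-\alpha)(\alpha-\beta)^{n-1}g_n(x)=\alpha(x-\beta)^n g_{n-1}(\alpha)-x(\alpha-\beta)^n g_{n-1}(x).$$ (The right-hand side vanishes at $x=\alpha$, so it is divisible by $x-\alpha$ and $g_n$ is a uniquely determined polynomial.) $[t^n]F(t)$ denotes the coefficient of $t^n$ in the formal power series $F$. *)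

(* Defs.v *)
From HB Require Import structures.
From mathcomp Require Import all_boot all_order all_algebra.
From mathcomp Require Import complex.
From mathcomp Require Import Rstruct.
Set Implicit Arguments. Unset Strict Implicit. Unset Printing Implicit Defensive.
Import Order.TTheory GRing.Theory Num.Theory.
Local Open Scope ring_scope.

Definition CC : Type := complex Rdefinitions.R.

Definition fps (F : Type) := nat -> F.

Section FPS.
Variable F : fieldType.

Definition fps_one : fps F := fun n => (n == 0%N)%:R.
Definition fps_t : fps F := fun n => (n == 1%N)%:R.
Definition fps_const (c : F) : fps F := fun n => if n is 0%N then c else 0.
Definition fps_mul (f g : fps F) : fps F :=
  fun n => \sum_(i < n.+1) f i * g (n - i)%N.

(** Coefficient lists of the multiplicative inverse of f (requires f 0 != 0):
    u_0 = (f_0)^-1,  u_m = - (f_0)^-1 * \sum_(i < m) f_(m-i) u_i. *)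
Fixpoint fps_inv_seq (f : fps F) (n : nat) : seq F :=
  match n with
  | 0%N => [:: (f 0%N)^-1]
  | m.+1 => let s := fps_inv_seq f m in
            rcons s (- (f 0%N)^-1 * \sum_(i < m.+1) f (m.+1 - i)%N * s`_i)
  end.
Definition fps_inv (f : fps F) : fps F := fun n => (fps_inv_seq f n)`_n.

End FPS.

(** The polynomials g_n:  g_0 = 1 and
    (x-a)(a-b)^(n-1) g_n(x) = a (x-b)^n g_(n-1)(a) - x (a-b)^n g_(n-1)(x). *)
Fixpoint gpoly (a b : CC) (n : nat) : {poly CC} :=
  match n with
  | 0%N => 1
  | m.+1 =>
      (a%:P * ('X - b%:P) ^+ m.+1 * ((gpoly a b m).[a])%:P
         - 'X * ((a - b) ^+ m.+1)%:P * gpoly a b m)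
      %/ (('X - a%:P) * ((a - b) ^+ m)%:P)
  end.

(* Main.v *)
Require Import Defs.
From HB Require Import structures.
From mathcomp Require Import all_boot all_order all_algebra.
From mathcomp Require Import complex.
From mathcomp Require Import Rstruct.
From Stdlib Require Import FunctionalExtensionality.
From mathcomp Require Import ring.
Import GRing.Theory.
Local Open Scope ring_scope.

Definition agree {F : Type} (k : nat) (f g : fps F) :=
  forall i, (i <= k)%N -> f i = g i.

Lemma size_inv_seq (F : fieldType) (f : fps F) n : size (fps_inv_seq f n) = n.+1.
Proof. by elim: n => [|n IH] //=; rewrite size_rcons IH. Qed.

Lemma inv_seq_nth (F : fieldType) (f : fps F) n i :
  (i <= n)%N -> (fps_inv_seq f n)`_i = fps_inv f i.
Proof.
elim: n => [|n IH] Hi.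
  by move: Hi; rewrite leqn0 => /eqP ->.
move: Hi; rewrite leq_eqVlt => /orP [/eqP -> //| Hi].
by rewrite /= nth_rcons size_inv_seq Hi; apply: IH.
Qed.

Lemma fps_inv0 (F : fieldType) (f : fps F) : fps_inv f 0 = (f 0%N)^-1.
Proof. by []. Qed.

Lemma fps_invS (F : fieldType) (f : fps F) m :
  fps_inv f m.+1 = - (f 0%N)^-1 * \sum_(i < m.+1) f (m.+1 - i)%N * fps_inv f i.
Proof.
rewrite {1}/fps_inv /= nth_rcons size_inv_seq ltnn eqxx.
congr (_ * _); apply: eq_bigr => i _; rewrite inv_seq_nth //.
by rewrite -ltnS ltn_ord.
Qed.

Lemma fps_mul_inv (F : fieldType) (f : fps F) : f 0%N != 0 ->
  fps_mul (fps_inv f) f = fps_one F.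
Proof.
move=> Hf; apply: functional_extensionality => n; rewrite /fps_mul /fps_one.
case: n => [|m].
  by rewrite big_ord1 fps_inv0 /= mulVf.
rewrite big_ord_recr /= subnn fps_invS.
rewrite (eq_bigr (fun i : 'I_m.+1 => f (m.+1 - i)%N * fps_inv f i)); last first.
  by move=> i _; rewrite mulrC.
set S := \sum_(i < m.+1) _.
by field.
Qed.

Lemma agree_mul (F : fieldType) k (f f' g g' : fps F) :
  agree k f f' -> agree k g g' -> agree k (fps_mul f g) (fps_mul f' g').
Proof.
move=> Hf Hg i Hi; apply: eq_bigr => j _.
have Hj : (j <= i)%N by rewrite -ltnS ltn_ord.
rewrite Hf ?Hg //; [exact: leq_trans (leq_subr _ _) Hi | exact: leq_trans Hj Hi].
Qed.

Lemma inv_seq_agree (F : fieldType) n (f f' : fps F) :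
  agree n f f' -> fps_inv_seq f n = fps_inv_seq f' n.
Proof.
elim: n => [|n IH] H /=; first by rewrite H.
rewrite IH; last by move=> i Hi; apply: H; exact: (leq_trans Hi).
rewrite H //; congr (rcons _ (_ * _)); apply: eq_bigr => i _; by rewrite H // leq_subr.
Qed.

Lemma agree_inv (F : fieldType) k (f f' : fps F) :
  agree k f f' -> agree k (fps_inv f) (fps_inv f').
Proof.
move=> H i Hi; rewrite /fps_inv (@inv_seq_agree F i f f') //.
by move=> j Hj; apply: H; exact: leq_trans Hj Hi.
Qed.

Lemma mul_t0 (F : fieldType) (h : fps F) : fps_mul (fps_t F) h 0 = 0.
Proof. by rewrite /fps_mul big_ord1 /fps_t mul0r. Qed.

Lemma mul_tS (F : fieldType) (h : fps F) k : fps_mul (fps_t F) h k.+1 = h k.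
Proof.
rewrite /fps_mul big_ord_recl big_ord_recl /fps_t /= mul0r add0r mul1r subn1 /=.
by rewrite big1 ?addr0 // => i _; rewrite mul0r.
Qed.

Definition PhiF (F : fieldType) (c b w : F) (y : fps F) : fps F :=
  fps_mul (fun n => c * y n * w + fps_const b n)
          (fps_inv (fun n => fps_one F n - y n * w)).
Arguments PhiF {F}.
Definition FF (F : fieldType) (c b w : F) (y : fps F) : fps F :=
  fps_mul (fps_t F) (PhiF c b w y).

Arguments FF {F}.

Lemma agree_le {F : Type} k k' (f g : fps F) : (k' <= k)%N -> agree k f g -> agree k' f g.
Proof. by move=> Hk H i Hi; apply: H; exact: leq_trans Hi Hk. Qed.

Lemma agree_F (F : fieldType) (c b w : F) k f g :
  agree k f g -> agree k.+1 (FF c b w f) (FF c b w g).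
Proof.
move=> H [|i] Hi; rewrite /FF; first by rewrite !mul_t0.
rewrite !mul_tS; apply: (@agree_mul F k) => //.
- by move=> j Hj; rewrite H.
- by apply: agree_inv => j Hj; rewrite H.
Qed.

Definition zero_fps (F : fieldType) : fps F := fun _ => 0.

Definition ysol (F : fieldType) (c b w : F) : fps F :=
  fun n => iter n.+1 (FF c b w) (zero_fps F) n.

Arguments ysol {F}.

Lemma iter_agree (F : fieldType) (c b w : F) k m :
  agree k (iter (k.+1 + m) (FF c b w) (zero_fps F)) (iter k.+1 (FF c b w) (zero_fps F)).
Proof.
elim: k m => [|k IH] m.
  by move=> i; rewrite leqn0 => /eqP ->; rewrite addSn !iterS /FF !mul_t0.
by rewrite addSn !iterS; apply: agree_F; apply: IH.
Qed.

Lemma ysol_agree (F : fieldType) (c b w : F) k :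
  agree k (ysol c b w) (iter k.+1 (FF c b w) (zero_fps F)).
Proof.
move=> i Hi; rewrite /ysol -(subnKC Hi) -addSn.
by rewrite (@iter_agree F c b w i (k - i)).
Qed.

Lemma ysol0 (F : fieldType) (c b w : F) : ysol c b w 0 = 0.
Proof. by rewrite /ysol /= /FF mul_t0. Qed.

Lemma ysol_fix (F : fieldType) (c b w : F) : ysol c b w = FF c b w (ysol c b w).
Proof.
apply: functional_extensionality => -[|m]; first by rewrite ysol0 /FF mul_t0.
have := @agree_F F c b w _ _ _ (@ysol_agree F c b w m).
by move=> /(_ m.+1 (leqnn _)) ->.
Qed.

Lemma ysol_uniq (F : fieldType) (c b w : F) y :
  y 0%N = 0 -> y = FF c b w y -> y = ysol c b w.
Proof.
move=> H0 Hf; suff H : forall k, agree k y (ysol c b w).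
  by apply: functional_extensionality => k; apply: (H k).
elim=> [|k IH]; first by move=> i; rewrite leqn0 => /eqP ->; rewrite H0 ysol0.
by have := @agree_F F c b w _ _ _ IH; rewrite -Hf -ysol_fix.
Qed.

Definition pf (g : CC -> CC) := exists p : {poly CC}, forall x, g x = p.[x].

Lemma pf_ext g g' : (forall x, g x = g' x) -> pf g' -> pf g.
Proof. by move=> H [p Hp]; exists p => x; rewrite H Hp. Qed.

Lemma pf_const (k : CC) : pf (fun _ => k).
Proof. by exists k%:P => x; rewrite hornerC. Qed.

Lemma pf_id : pf (fun x => x).
Proof. by exists 'X => x; rewrite hornerX. Qed.

Lemma pf_add g h : pf g -> pf h -> pf (fun x => g x + h x).
Proof. by move=> [p Hp] [q Hq]; exists (p + q) => x; rewrite hornerD Hp Hq. Qed.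

Lemma pf_mul g h : pf g -> pf h -> pf (fun x => g x * h x).
Proof. by move=> [p Hp] [q Hq]; exists (p * q) => x; rewrite hornerM Hp Hq. Qed.

Lemma pf_opp g : pf g -> pf (fun x => - g x).
Proof. by move=> [p Hp]; exists (- p) => x; rewrite hornerN Hp. Qed.

Lemma pf_sum n (G : 'I_n -> CC -> CC) :
  (forall i, pf (G i)) -> pf (fun x => \sum_(i < n) G i x).
Proof.
elim: n G => [|n IH] G HG.
  by apply: (@pf_ext _ (fun _ => 0)) => [x|]; rewrite ?big_ord0 //; exact: pf_const.
apply: (@pf_ext _ (fun x => \sum_(i < n) G (widen_ord (leqnSn n) i) x + G ord_max x)).
  by move=> x; rewrite big_ord_recr.
by apply: pf_add => //; apply: IH.
Qed.

Definition famf (f : CC -> fps CC) := forall k, pf (fun x => f x k).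

Lemma famf_mul f g : famf f -> famf g -> famf (fun x => fps_mul (f x) (g x)).
Proof.
move=> Hf Hg k; rewrite /fps_mul; apply: (@pf_sum _ (fun i x => f x i * g x (k - i)%N)).
by move=> i; apply: pf_mul.
Qed.

Lemma famf_inv f : famf f -> (forall x, f x 0%N = 1) -> famf (fun x => fps_inv (f x)).
Proof.
move=> Hf H0; elim/ltn_ind => -[|m] IH.
  by apply: (@pf_ext _ (fun _ => 1)) => [x|]; rewrite ?fps_inv0 ?H0 ?invr1 //; exact: pf_const.
apply: (@pf_ext _ (fun x => - 1 * \sum_(i < m.+1) f x (m.+1 - i)%N * fps_inv (f x) i)).
  by move=> x; rewrite fps_invS H0 invr1.
apply: pf_mul; first exact: pf_const.
apply: (@pf_sum _ (fun i x => f x (m.+1 - i)%N * fps_inv (f x) i)) => i.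
by apply: pf_mul => //; apply: IH; rewrite ltnS -ltnS ltn_ord.
Qed.

Lemma iter0 (F : fieldType) (c b w : F) m : iter m (FF c b w) (zero_fps F) 0 = 0.
Proof. by case: m => [|m] //=; rewrite /FF mul_t0. Qed.

Lemma famf_iter (c b : CC) (w : CC -> CC) m : pf w ->
  famf (fun x => iter m (FF c b (w x)) (zero_fps CC)).
Proof.
move=> Hw; elim: m => [|m IH] /=; first by move=> k; exact: pf_const.
apply: famf_mul; first by move=> k; exact: pf_const.
apply: famf_mul.
  move=> k; apply: pf_add; last exact: pf_const.
  by apply: pf_mul => //; apply: pf_mul => //; exact: pf_const.
apply: famf_inv.
  move=> k; apply: pf_add; first exact: pf_const.
  by apply: pf_opp; apply: pf_mul.
by move=> x; rewrite iter0 mul0r subr0.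
Qed.

Lemma famf_ysol (c b : CC) (w : CC -> CC) : pf w -> famf (fun x => ysol c b (w x)).
Proof. by move=> Hw k; exact: (famf_iter c b w k.+1 Hw k). Qed.

Lemma famf_h (c b : CC) (w : CC -> CC) : pf w ->
  famf (fun x => fps_inv (fun k => fps_one CC k - ysol c b (w x) k)).
Proof.
move=> Hw; apply: famf_inv.
  move=> k; apply: pf_add; first exact: pf_const.
  by apply: pf_opp; apply: famf_ysol.
by move=> x; rewrite ysol0 subr0.
Qed.

Implicit Types p q : {poly CC}.

Definition modeq (N : nat) (p q : {poly CC}) := exists r, p - q = 'X^(N.+1) * r.

Lemma modeq_coef N p q : (forall k, (k <= N)%N -> p`_k = q`_k) -> modeq N p q.
Proof.
move=> H; exists (drop_poly N.+1 (p - q)).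
have Ht : take_poly N.+1 (p - q) = 0.
  apply/polyP => k; rewrite coef_take_poly coef0.
  by case: ifP => // Hk; rewrite coefB H ?subrr.
by rewrite -{1}(poly_take_drop N.+1 (p - q)) Ht add0r mulrC.
Qed.

Lemma coef_modeq N p q : modeq N p q -> forall k, (k <= N)%N -> p`_k = q`_k.
Proof.
move=> [r Hr] k Hk; apply/eqP; rewrite -subr_eq0 -coefB Hr coefXnM.
by rewrite ltnS Hk.
Qed.

Lemma meq_refl N p : modeq N p p.
Proof. by exists 0; rewrite subrr mulr0. Qed.

Lemma meq_eq N p q : p = q -> modeq N p q.
Proof. by move=> ->; exact: meq_refl. Qed.

Lemma meq_sym N p q : modeq N p q -> modeq N q p.
Proof. by move=> [r Hr]; exists (- r); rewrite mulrN -Hr opprB. Qed.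

Lemma meq_trans N p q (s : {poly CC}) : modeq N p q -> modeq N q s -> modeq N p s.
Proof.
move=> [r Hr] [r' Hr']; exists (r + r').
by rewrite mulrDr -Hr -Hr' addrA subrK.
Qed.

Lemma meq_add N p (p' : {poly CC}) q (q' : {poly CC}) : modeq N p p' -> modeq N q q' -> modeq N (p + q) (p' + q').
Proof.
move=> [r Hr] [r' Hr']; exists (r + r').
by rewrite mulrDr -Hr -Hr'; ring.
Qed.

Lemma meq_opp N p (p' : {poly CC}) : modeq N p p' -> modeq N (- p) (- p').
Proof. by move=> [r Hr]; exists (- r); rewrite mulrN -Hr; ring. Qed.

Lemma meq_sub N p (p' : {poly CC}) q (q' : {poly CC}) : modeq N p p' -> modeq N q q' -> modeq N (p - q) (p' - q').
Proof. by move=> H1 H2; apply: meq_add => //; apply: meq_opp. Qed.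

Lemma meq_mul N p (p' : {poly CC}) q (q' : {poly CC}) : modeq N p p' -> modeq N q q' -> modeq N (p * q) (p' * q').
Proof.
move=> [r Hr] [r' Hr']; exists (r * q + p' * r').
have -> : p * q - p' * q' = (p - p') * q + p' * (q - q') by ring.
by rewrite Hr Hr'; ring.
Qed.

Lemma modeq_cancel N p (s : {poly CC}) : s`_0 != 0 -> modeq N (p * s) 0 -> modeq N p 0.
Proof.
move=> Hs H; have Hc := @coef_modeq _ _ _ H; apply: modeq_coef.
elim/ltn_ind => k IH Hk; rewrite coef0.
have := Hc k Hk; rewrite coef0 coefM big_ord_recr /= subnn.
rewrite big1 ?add0r; last first.
  move=> i _; rewrite IH ?coef0 ?mul0r //.
  exact: leq_trans (ltnW (ltn_ord i)) Hk.
by move/eqP; rewrite mulf_eq0 (negbTE Hs) orbF => /eqP.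
Qed.

Definition Ts (N : nat) (s : CC) (f : fps CC) : {poly CC} :=
  \poly_(i < N.+1) (s ^+ i * f i).

Lemma Ts_coef N s f k : (k <= N)%N -> (Ts N s f)`_k = s ^+ k * f k.
Proof. by move=> Hk; rewrite coef_poly ltnS Hk. Qed.

Lemma Ts_mul N s f g : modeq N (Ts N s (fps_mul f g)) (Ts N s f * Ts N s g).
Proof.
apply: modeq_coef => k Hk; rewrite Ts_coef // coefM /fps_mul mulr_sumr.
apply: eq_bigr => j _.
have Hj : (j <= k)%N by rewrite -ltnS ltn_ord.
rewrite !Ts_coef ?(leq_trans Hj Hk) ?(leq_trans (leq_subr _ _) Hk) //.
by rewrite -{1}(subnKC Hj) exprD; ring.
Qed.

Lemma Ts_one N s : modeq N (Ts N s (fps_one CC)) 1.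
Proof.
apply: modeq_coef => k Hk; rewrite Ts_coef // coef1 /fps_one.
by case: k Hk => [|k] _ /=; rewrite ?expr0 ?mul1r ?mulr0.
Qed.

Lemma Ts_t N s : modeq N (Ts N s (fps_t CC)) (s%:P * 'X).
Proof.
apply: modeq_coef => k Hk; rewrite Ts_coef // coefCM coefX /fps_t.
by case: k Hk => [|[|k]] _ /=; rewrite ?expr0 ?expr1 ?mulr0.
Qed.

Lemma Ts_lin N s (f g : fps CC) (al be ga : CC) :
  (forall k, g k = al * fps_one CC k + be * f k + fps_const ga k) ->
  modeq N (Ts N s g) ((al + ga)%:P + be%:P * Ts N s f).
Proof.
move=> Hg; apply: modeq_coef => k Hk; rewrite Ts_coef // coefD coefC coefCM Ts_coef // Hg.
rewrite /fps_one /fps_const.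
case: k Hk => [|k] _ /=; rewrite ?expr0; ring.
Qed.

Lemma Ts_coef0 N s f : (Ts N s f)`_0 = f 0%N.
Proof. by rewrite Ts_coef // expr0 mul1r. Qed.

Arguments meq_trans {N p q s}. Arguments meq_sym {N p q}.
Arguments meq_add {N p p' q q'}. Arguments meq_sub {N p p' q q'}.
Arguments meq_mul {N p p' q q'}. Arguments meq_opp {N p p'}.
Arguments meq_eq {N p q}. Arguments modeq_cancel {N p s}. Arguments coef_modeq {N p q}.

Lemma sol_facts N s (c b w : CC) :
  let y := ysol c b w in
  let I := fps_inv (fun k => fps_one CC k - y k * w) in
  let H := fps_inv (fun k => fps_one CC k - y k) in
  [/\ modeq N (Ts N s I * (1 - w%:P * Ts N s y)) 1,
      modeq N (Ts N s y) ((s%:P * 'X) * (((c * w)%:P * Ts N s y + b%:P) * Ts N s I)),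
      modeq N (Ts N s H * (1 - Ts N s y)) 1
    & (Ts N s y)`_0 = 0].
Proof.
move=> y I H; split.
- have E : fps_mul I (fun k => fps_one CC k - y k * w) = fps_one CC.
    by apply: fps_mul_inv; rewrite /y ysol0 mul0r subr0 /fps_one /= oner_neq0.
  apply: (meq_trans _ (Ts_one N s)); rewrite -E.
  apply: (meq_trans _ (meq_sym (Ts_mul N s _ _))).
  apply: meq_mul; first exact: meq_refl.
  apply: meq_sym; apply: meq_trans (Ts_lin N s y _ 1 (- w) 0 _) _.
    by move=> k; rewrite /fps_const; case: k => [|k] /=; ring.
  by apply: meq_eq; rewrite addr0 polyCN; ring.
- have Ey : y = fps_mul (fps_t CC) (fps_mul (fun n => c * y n * w + fps_const b n) I).
    exact: ysol_fix.
  rewrite {1}Ey; apply: (meq_trans (Ts_mul N s _ _)).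
  apply: meq_mul; first exact: Ts_t.
  apply: (meq_trans (Ts_mul N s _ _)); apply: meq_mul; last exact: meq_refl.
  apply: meq_trans (Ts_lin N s y _ 0 (c * w) b _) _.
    by move=> k; rewrite /fps_one; ring.
  by apply: meq_eq; rewrite add0r addrC.
- have E : fps_mul H (fun k => fps_one CC k - y k) = fps_one CC.
    by apply: fps_mul_inv; rewrite /y ysol0 subr0 /fps_one /= oner_neq0.
  apply: (meq_trans _ (Ts_one N s)); rewrite -E.
  apply: (meq_trans _ (meq_sym (Ts_mul N s _ _))).
  apply: meq_mul; first exact: meq_refl.
  apply: meq_sym; apply: meq_trans (Ts_lin N s y _ 1 (- 1) 0 _) _.
    by move=> k; rewrite /fps_const; case: k => [|k] /=; ring.
  by apply: meq_eq; rewrite addr0 polyCN; ring.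
- by rewrite Ts_coef0 /y ysol0.
Qed.

Lemma meq_sub0 N p q : modeq N (p - q) 0 -> modeq N p q.
Proof. by move=> [r Hr]; exists r; rewrite -Hr subr0. Qed.

Lemma meq_lin2 N p1 q1 p2 q2 (k1 k2 L : {poly CC}) :
  modeq N p1 q1 -> modeq N p2 q2 ->
  L = k1 * (p1 - q1) + k2 * (p2 - q2) -> modeq N L 0.
Proof.
move=> [r1 H1] [r2 H2] ->; exists (k1 * r1 + k2 * r2).
by rewrite H1 H2 subr0; ring.
Qed.

Lemma meq_lin3 N p1 q1 p2 q2 p3 q3 (k1 k2 k3 L : {poly CC}) :
  modeq N p1 q1 -> modeq N p2 q2 -> modeq N p3 q3 ->
  L = k1 * (p1 - q1) + k2 * (p2 - q2) + k3 * (p3 - q3) -> modeq N L 0.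
Proof.
move=> [r1 H1] [r2 H2] [r3 H3] ->; exists (k1 * r1 + k2 * r2 + k3 * r3).
by rewrite H1 H2 H3 subr0; ring.
Qed.

Arguments meq_lin2 {N p1 q1 p2 q2} k1 k2 {L}.
Arguments meq_lin3 {N p1 q1 p2 q2 p3 q3} k1 k2 k3 {L}.
Arguments meq_sub0 {N p q}.

Lemma idE (a b u : CC) (Th G Y : {poly CC}) :
  ((u - 1)%:P * (Th - 1) -
   ((a * u)%:P * ('X * G) - (b + (a - b) * u)%:P * ('X * Th))) *
  ((1 - Y) * (1 - u%:P * Y)) =
  ((u - 1)%:P * (1 - u%:P * Y) + (b + (a - b) * u)%:P * 'X * (1 - u%:P * Y)) *
  (Th * (1 - Y) - 1) + - (a * u)%:P * 'X * (1 - Y) * (G * (1 - u%:P * Y) - 1) +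
  (u - 1)%:P * (Y * (1 - u%:P * Y) - 'X * (((a - b) * u)%:P * Y + b%:P)).
Proof. ring. Qed.

Lemma idF (a u x h1 h0 g0 : CC) n :
  (u - 1) * (h1 - 0) - (a * u * (u ^+ n * g0) - x * h0) = 0 ->
  (u - 1) * h1 = a * u ^+ n.+1 * g0 - x * h0.
Proof. by move=> E; apply: subr0_eq; rewrite -E exprS; ring. Qed.

Lemma core (a b x u : CC) n : x = b + (a - b) * u ->
  (u - 1) * fps_inv (fun k => fps_one CC k - ysol (a - b) b u k) n.+1 =
  a * u ^+ n.+1 * fps_inv (fun k => fps_one CC k - ysol (a - b) b 1 k) n
  - x * fps_inv (fun k => fps_one CC k - ysol (a - b) b u k) n.
Proof.
move=> hx; set c := a - b.
have [h1 h2 h3 h4] := sol_facts n.+1 1 c b u.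
have [h5 h6 h7 h8] := sol_facts n.+1 u c b 1.
set y := ysol c b u in h1 h2 h3 h4.
set yA := ysol c b 1 in h5 h6 h7 h8.
set I := fps_inv _ in h1 h2.
set H := fps_inv _ in h3.
set J := fps_inv _ in h5 h6.
set HA := fps_inv _ in h7.
set N := n.+1 in h1 h2 h3 h4 h5 h6 h7 h8 *.
set Y := Ts N 1 y in h1 h2 h3 h4.
set Ti := Ts N 1 I in h1 h2.
set Th := Ts N 1 H in h3.
set Z := Ts N u yA in h5 h6 h7 h8.
set Jz := Ts N u J in h5 h6.
set G := Ts N u HA in h7.
have cTh : forall k, (k <= N)%N -> Th`_k = H k.
  by move=> k Hk; rewrite /Th Ts_coef // expr1n mul1r.
have cG : forall k, (k <= N)%N -> G`_k = u ^+ k * HA k.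
  by move=> k Hk; rewrite /G Ts_coef.
clearbody Y Ti Th Z Jz G.
have K1 : modeq N (Y * (1 - u%:P * Y) - 'X * ((c * u)%:P * Y + b%:P)) 0.
  apply: (meq_lin2 (1 - u%:P * Y) ('X * ((c * u)%:P * Y + b%:P)) h2 h1).
  by rewrite polyC1; ring.
have K2 : modeq N (Z * (1 - Z) - (u%:P * 'X) * (c%:P * Z + b%:P)) 0.
  apply: (meq_lin2 (1 - Z) ((u%:P * 'X) * (c%:P * Z + b%:P)) h6 h5).
  by rewrite mulr1 polyC1; ring.
have D : modeq N ((u%:P * Y - Z) * (1 - u%:P * Y - Z - (u * c)%:P * 'X)) 0.
  apply: (meq_lin2 u%:P (-1) K1 K2).
  by rewrite !subr0; ring.
have ZY : modeq N (u%:P * Y - Z) 0.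
  apply: modeq_cancel D.
  rewrite !coefB coef1 coefCM h4 h8 coefCM coefX /=.
  by rewrite !mulr0 !subr0 oner_neq0.
have GY : modeq N (G * (1 - u%:P * Y) - 1) 0.
  apply: (meq_lin2 1 (- G) h7 ZY).
  by rewrite subr0; ring.
set E := (u - 1)%:P * (Th - 1) - ((a * u)%:P * ('X * G) - x%:P * ('X * Th)).
have HE : modeq N E 0.
  apply: (@modeq_cancel _ _ ((1 - Y) * (1 - u%:P * Y))).
    by rewrite coefM big_ord1 !coefB coef1 coefCM h4 !mulr0 !subr0 mulr1 oner_neq0.
  apply: (meq_lin3 ((u - 1)%:P * (1 - u%:P * Y) + x%:P * 'X * (1 - u%:P * Y))
                   (- (a * u)%:P * 'X * (1 - Y)) (u - 1)%:P h3 GY K1).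
  by rewrite /E hx !subr0 /c; apply: idE.
have := coef_modeq HE N (leqnn _).
rewrite /E !coefB !coefCM !coefXM coefB coef0 /=.
have -> : (1 : {poly CC})`_N = 0 by rewrite coef1.
rewrite !cTh ?leqnSn // cG ?leqnSn //.
by apply: idF.
Qed.


Lemma off_point (Q : {poly CC}) (a : CC) : (forall z, z != a -> Q.[z] = 0) -> Q = 0.
Proof.
move=> H; apply/eqP; apply: contraT => HQ.
have := @max_poly_roots _ Q [seq a + (i.+1)%:R | i <- iota 0 (size Q)] HQ.
rewrite size_map size_iota ltnn; apply.
  apply/allP => z /mapP [i _ ->]; rewrite /root; apply/eqP; apply: H.
  by rewrite -subr_eq0 addrAC subrr add0r Num.Theory.pnatr_eq0.
rewrite map_inj_uniq ?iota_uniq //.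
by move=> i j /addrI /eqP; rewrite Num.Theory.eqr_nat eqSS => /eqP.
Qed.

Definition hfun (a b z : CC) (n : nat) : CC :=
  fps_inv (fun k => fps_one CC k - ysol (a - b) b ((b - z) / (b - a)) k) n.

Lemma hfun_poly (a b : CC) n : exists P : {poly CC}, forall z, hfun a b z n = P.[z].
Proof.
have Hw : pf (fun z => (b - z) / (b - a)).
  apply: pf_mul; last exact: pf_const.
  by apply: pf_add; [exact: pf_const | apply: pf_opp; exact: pf_id].
have [P HP] := famf_h (a - b) b _ Hw n; exists P => z; exact: HP.
Qed.

Lemma alg (a b z c u q h1 h0 hA : CC) m :
  c * u = z - b -> c * (u - 1) = z - a -> (z - a) * c ^+ m != 0 ->
  q * ((z - a) * c ^+ m) = a * (z - b) ^+ m.+1 * hA - z * c ^+ m.+1 * h0 ->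
  (u - 1) * h1 = a * u ^+ m.+1 * hA - z * h0 -> q = h1.
Proof.
move=> Hcu Hcu1 Hnz E1 E2; apply: (mulIf Hnz); rewrite E1 -Hcu1 -Hcu exprMn.
rewrite [RHS](_ : _ = c ^+ m.+1 * ((u - 1) * h1)); last by rewrite exprSr; ring.
by rewrite E2; ring.
Qed.

Lemma gpoly_eq (a b : CC) : a != b -> forall n z, (gpoly a b n).[z] = hfun a b z n.
Proof.
move=> Hab; have Hba : b - a != 0 by rewrite subr_eq0 eq_sym.
have Hc : a - b != 0 by rewrite subr_eq0.
elim=> [|m IH] z.
  by rewrite /= hornerC /hfun fps_inv0 ysol0 /fps_one /= subr0 invr1.
set g := gpoly a b m.
set Num := a%:P * ('X - b%:P) ^+ m.+1 * (g.[a])%:P - 'X * ((a - b) ^+ m.+1)%:P * g.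
set Den := ('X - a%:P) * ((a - b) ^+ m)%:P.
have : root Num a by rewrite /root /Num !hornerE; apply/eqP; ring.
move=> /factor_theorem [q Hq].
set Q' := q * (((a - b) ^+ m)^-1)%:P.
have HN : Num = Q' * Den.
  have e : (((a - b) ^+ m)^-1)%:P * ((a - b) ^+ m)%:P = 1.
    by rewrite -polyCM mulVf ?polyC1 // expf_neq0.
  rewrite Hq /Q' /Den.
  transitivity (q * ('X - a%:P) * ((((a - b) ^+ m)^-1)%:P * ((a - b) ^+ m)%:P)).
    by rewrite e mulr1.
  by rewrite !mulrA; congr (_ * _); rewrite -!mulrA; congr (_ * _); rewrite mulrC.
have HDen : Den != 0.
  by rewrite /Den mulf_neq0 ?polyXsubC_eq0 // polyC_eq0 expf_neq0.
have Hg : gpoly a b m.+1 = Q'.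
  by rewrite -(mulpK Q' HDen) -HN.
have Hoff : forall z, z != a -> Q'.[z] = hfun a b z m.+1.
  move=> {}z Hz.
  have Hwa : (b - a) / (b - a) = 1 by rewrite divff.
  have hx : z = b + (a - b) * ((b - z) / (b - a)) by field.
  have E2 := core a b z ((b - z) / (b - a)) m hx.
  have HA : hfun a b a m = fps_inv (fun k => fps_one CC k - ysol (a - b) b 1 k) m.
    by rewrite /hfun divff.
  apply: (@alg a b z (a - b) ((b - z) / (b - a)) _ (hfun a b z m.+1) (hfun a b z m) (hfun a b a m) m).
  - by field.
  - by field.
  - by apply: mulf_neq0; [rewrite subr_eq0 | exact: expf_neq0 Hc].
  - have -> : (z - a) * (a - b) ^+ m = Den.[z] by rewrite /Den !hornerE.
    by rewrite -hornerM -HN /Num /g !hornerE !IH.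
  - (rewrite HA; exact: E2).
rewrite Hg.
have [P HP] := hfun_poly a b m.+1.
have : Q' - P = 0.
  apply: (@off_point _ a) => w Hw.
  by rewrite hornerD hornerN Hoff // HP subrr.
move/eqP; rewrite subr_eq0 => /eqP ->; by rewrite HP.
Qed.

Theorem mainTheorem6 (a b x : CC) : a != b ->
  let w : CC := (b - x) / (b - a) in
  (* Phi(y) = ((a - b) y w + b) / (1 - y w), as a formal power series in t *)
  let Phi := fun y : fps CC =>
    fps_mul (fun n => (a - b) * y n * w + fps_const b n)
            (fps_inv (fun n => fps_one CC n - y n * w)) in
  exists y : fps CC,
    [/\ y 0%N = 0,
        y = fps_mul (fps_t CC) (Phi y),
        (forall y' : fps CC, y' 0%N = 0 -> y' = fps_mul (fps_t CC) (Phi y') -> y' = y)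
      & forall n : nat, (gpoly a b n).[x] = fps_inv (fun k => fps_one CC k - y k) n].
Proof.
move=> Hab w Phi; exists (ysol (a - b) b w); split.
- exact: ysol0.
- exact: ysol_fix.
- by move=> y' H0 Hf; apply: ysol_uniq.
- by move=> n; rewrite gpoly_eq.
Qed.
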